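(* Let $n,m\ge0$ be integers. There exists a nonempty finite multiset $S$ of pairs $(i,j)$ with $0\le i\le n$ and $0\le j\le m$ such that: (1) for each $d\in\{0,1,\dots,n+m\}$ the number of elements of $S$ with $i+j=d$ equals $|S|/(n+m+1)$; (2) for each $i\in\{0,\dots,n\}$ the number of elements of $S$ with first coordinate $i$ equals $|S|/(n+1)$; (3) for each $j\in\{0,\dots,m\}$ the number of elements of $S$ with second coordinate $j$ equals $|S|/(m+1)$.
   Context: Here $S$ is a multiset: pairs may be repeated, and counts include multiplicities. (Equivalently, $S$ is a multiset of quadratic monomials $x_iy_j$ in weighted variables with $\deg x_i=i$, $\deg y_j=j$ in which every degree in $[0,n+m]$, every $x_i$, and every $y_j$ occurs equally often.) *)

(* Defs.v *)
From mathcomp Require Import all_boot.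
Set Implicit Arguments. Unset Strict Implicit. Unset Printing Implicit Defensive.
(* A finite multiset of pairs (i,j) is represented by a sequence
   S : seq (nat * nat); multiplicities are counted with [count]. *)

(* Main.v *)
Require Import Defs.
From mathcomp Require Import all_boot.
From mathcomp Require Import zify.

Definition sh1 (p : nat * nat) := (p.1.+1, p.2).
Definition sh2 (p : nat * nat) := (p.1, p.2.+1).

Fixpoint T (n m : nat) {struct n} : seq (nat * nat) :=
  match n with
  | 0 => [seq (0, j) | j <- iota 0 m.+1]
  | n'.+1 => (fix Tm (m : nat) := match m with
       | 0 => [seq (i, 0) | i <- iota 0 n'.+2]
       | m'.+1 => nseq 'C(n'.+1 + m'.+1, n'.+1) (0,0)
                   ++ map sh1 (T n' m'.+1) ++ map sh2 (Tm m')
       end) m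
  end.

Lemma TSS n m : T n.+1 m.+1 = nseq 'C(n.+1 + m.+1, n.+1) (0,0)
                   ++ map sh1 (T n m.+1) ++ map sh2 (T n.+1 m).
Proof. by []. Qed.

Lemma binC' a b : 'C(a + b, a) = 'C(a + b, b).
Proof. by rewrite -[RHS]bin_sub ?leq_addl // addnK. Qed.

Lemma TS0 n : T n.+1 0 = [seq (i, 0) | i <- iota 0 n.+2].
Proof. by []. Qed.

Lemma count_iota1 {k j} : j <= k -> count (pred1 j) (iota 0 k.+1) = 1.
Proof.
move=> hj; rewrite count_uniq_mem ?iota_uniq // mem_iota /=.
by rewrite add0n ltnS hj.
Qed.

Lemma T_spec n m :
 [/\ all (fun p => (p.1 <= n) && (p.2 <= m)) (T n m),
     size (T n m) = (n+m).+1 * 'C(n+m,n),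
     forall d, d <= n+m -> count (fun p => p.1+p.2 == d) (T n m) = 'C(n+m,n),
     forall i, i <= n -> count (fun p => p.1 == i) (T n m) = 'C((n+m).+1, n.+1) &
     forall j, j <= m -> count (fun p => p.2 == j) (T n m) = 'C((n+m).+1, m.+1)].
Proof.
elim: n m => [|n IHn] m.
  split.
  - rewrite /= all_map; apply/allP => j; rewrite mem_iota /=; lia.
  - by rewrite size_map size_iota add0n bin0 muln1.
  - move=> d hd; rewrite add0n in hd; rewrite count_map add0n bin0 -(count_iota1 hd).
    by apply: eq_count => j.
  - move=> i; rewrite leqn0 => /eqP ->; rewrite count_map add0n bin1.
    by rewrite (eq_count (a2 := predT)) ?count_predT ?size_iota.
  - move=> j hj; rewrite count_map add0n binn -(count_iota1 hj).
    by apply: eq_count => k.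
elim: m => [|m IHm].
  split.
  - rewrite TS0 all_map; apply/allP => j; rewrite mem_iota /=; lia.
  - by rewrite TS0 size_map size_iota addn0 binn muln1.
  - move=> d hd; rewrite TS0 count_map addn0 binn; rewrite addn0 in hd.
    rewrite -(count_iota1 hd). by apply: eq_count => j /=; rewrite addn0.
  - move=> i hi; rewrite TS0 count_map addn0 binn -(count_iota1 hi).
    by apply: eq_count => k.
  - move=> j; rewrite leqn0 => /eqP ->; rewrite TS0 count_map addn0 bin1.
    by rewrite (eq_count (a2 := predT)) ?count_predT ?size_iota.
have [A1 S1 D1 C1 R1] := IHn m.+1.
have [A2 S2 D2 C2 R2] := IHm.
rewrite TSS; split.
- rewrite !all_cat all_nseq /= !all_map; apply/and3P; split.
  + by rewrite orbT.
  + apply/allP => p /(allP A1) /=; lia.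
  + apply/allP => p /(allP A2) /=; lia.
- rewrite !size_cat size_nseq !size_map S1 S2.
  have -> : n + m.+1 = (n + m).+1 by lia.
  have -> : n.+1 + m = (n + m).+1 by lia.
  have -> : n.+1 + m.+1 = (n + m).+2 by lia.
  by rewrite binS; lia.
- move=> d hd; rewrite !count_cat count_nseq !count_map.
  case: d hd => [|d] hd.
  + rewrite /= mul1n (eq_count (a2 := pred0)) ?count_pred0; last by [].
    rewrite (eq_count (a2 := pred0)) ?count_pred0 ?addn0 //; move=> p /=; by rewrite addnS.
  + rewrite /= mul0n add0n.
    rewrite (eq_count (a1 := preim sh1 _) (a2 := fun p => p.1 + p.2 == d)); last by [].
    rewrite (eq_count (a1 := preim sh2 _) (a2 := fun p => p.1 + p.2 == d)); last first.
      by move=> p /=; rewrite addnS.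
    rewrite D1 ?D2; try lia.
    have -> : n + m.+1 = (n + m).+1 by lia.
    have -> : n.+1 + m = (n + m).+1 by lia.
    have -> : n.+1 + m.+1 = (n + m).+2 by lia.
    rewrite [in RHS]binS; lia.
- move=> i hi; rewrite !count_cat count_nseq !count_map.
  rewrite (eq_count (a1 := preim sh2 _) (a2 := fun p => p.1 == i)); last by [].
  rewrite C2 //.
  case: i hi => [|i] hi.
  + rewrite /= mul1n (eq_count (a2 := pred0)) ?count_pred0; last by [].
    have -> : n.+1 + m = (n + m).+1 by lia.
    have -> : n.+1 + m.+1 = (n + m).+2 by lia.
    rewrite [in RHS]binS; lia.
  + rewrite /= mul0n add0n.
    rewrite (eq_count (a1 := preim sh1 _) (a2 := fun p => p.1 == i)); last by [].
    rewrite C1 //.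
    have -> : n + m.+1 = (n + m).+1 by lia.
    have -> : n.+1 + m = (n + m).+1 by lia.
    have -> : n.+1 + m.+1 = (n + m).+2 by lia.
    rewrite [in RHS]binS; lia.
- move=> j hj; rewrite !count_cat count_nseq !count_map.
  rewrite (eq_count (a1 := preim sh1 _) (a2 := fun p => p.2 == j)); last by [].
  rewrite R1 //.
  case: j hj => [|j] hj.
  + rewrite /= mul1n (eq_count (a1 := preim sh2 _) (a2 := pred0)) ?count_pred0; last by [].
    have -> : n + m.+1 = (n + m).+1 by lia.
    have -> : n.+1 + m.+1 = (n + m).+2 by lia.
    rewrite [in RHS]binS.
    have := binC' n.+1 m.+1; rewrite addSn addnS => ->; lia.
  + rewrite /= mul0n add0n.
    rewrite (eq_count (a1 := preim sh2 _) (a2 := fun p => p.2 == j)); last by [].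
    rewrite R2 //.
    have -> : n + m.+1 = (n + m).+1 by lia.
    have -> : n.+1 + m = (n + m).+1 by lia.
    have -> : n.+1 + m.+1 = (n + m).+2 by lia.
    rewrite [in RHS]binS; lia.
Qed.

Theorem lemma6p6 (n m : nat) :
  exists S : seq (nat * nat),
    [/\ 0 < size S,
        all (fun p => (p.1 <= n) && (p.2 <= m)) S,
        (forall d, d <= n + m ->
           count (fun p => p.1 + p.2 == d) S * (n + m + 1) = size S),
        (forall i, i <= n ->
           count (fun p => p.1 == i) S * (n + 1) = size S) &
        (forall j, j <= m ->
           count (fun p => p.2 == j) S * (m + 1) = size S)].
Proof.
have [A S D C R] := T_spec n m.
exists (T n m); split => //.
- by rewrite S muln_gt0 bin_gt0 leq_addr.
- by move=> d hd; rewrite D // S addn1 mulnC.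
- move=> i hi; rewrite C // S addn1 mulnC -mul_bin_diag.
  by [].
- move=> j hj; rewrite R // S addn1 mulnC -mul_bin_diag /=.
  by rewrite binC'.
Qed.
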